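(* For every $\lambda\in\Lambda^+$, every nonzero $\mathfrak g$-submodule of $\mathcal V(\lambda)$ contains $1\otimes L^0(\lambda)$. Consequently $\mathcal V(\lambda)\cong\nabla(\lambda)$ has a unique simple submodule, namely $U(\mathfrak g)(1\otimes L^0(\lambda))$.
   Context: $\mathbb F$ algebraically closed of characteristic $0$, $m,n\ge1$. $\mathcal R=\mathbb F[x_1,\dots,x_m]\otimes\Lambda(y_1,\dots,y_n)$ ($x_i$ even, $y_s$ odd), $\mathfrak g=W(m,n)$ the Lie superalgebra of superderivations of $\mathcal R$, free over $\mathcal R$ on $\partial_i$ (even, $\partial_ix_j=\delta_{ij}$) and $D_t$ (odd, $D_ty_s=\delta_{ts}$); $\mathfrak g_0=\mathrm{span}\{x_i\partial_j,x_iD_t,y_s\partial_j,y_sD_t\}\cong\mathfrak{gl}(m|n)$. $\Lambda^+$ is the set of dominant integral weights of $\mathfrak{gl}(m|n)$ and $L^0(\lambda)$ the finite-dimensional irreducible $\mathfrak g_0$-module of highest weight $\lambda$, representation $\xi$. $\mathcal V(\lambda)=\mathcal R\otimes L^0(\lambda)$ with action (homogeneous $f,g$): $f\partial_i.(g\otimes v)=f\partial_i(g)\otimes v+\sum_j\partial_j(f)g\otimes\xi(x_j\partial_i)v+(-1)^{\wp(f)+\wp(g)+1}\sum_jD_j(f)g\otimes\xi(y_j\partial_i)v$, $fD_i.(g\otimes v)=fD_i(g)\otimes v+(-1)^{\wp(g)}\sum_j\partial_j(f)g\otimes\xi(x_jD_i)v+(-1)^{\wp(f)+1}\sum_jD_j(f)g\otimes\xi(y_jD_i)v$.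 $\nabla(\lambda)=\mathrm{Hom}_{U(\mathfrak g_{\ge0})}(U(\mathfrak g),L^0(\lambda))$ is the costandard module, isomorphic to $\mathcal V(\lambda)$. *)

(* Defs.v *)
From HB Require Import structures.
From mathcomp Require Import all_boot all_order all_algebra.
From mathcomp Require Import mpoly.
Set Implicit Arguments. Unset Strict Implicit. Unset Printing Implicit Defensive.
Import Order.TTheory GRing.Theory.
Local Open Scope ring_scope.

Section Wmn.
Variables (F : fieldType) (m n : nat).

(* R = F[x_1..x_m] (x) Lambda(y_1..y_n): f = \sum_S f S * y^S with
   y^S = y_{s_1} ... y_{s_k}, s_1 < ... < s_k. *)
Definition Rsup := {ffun {set 'I_n} -> {mpoly F[m]}}.

Definition R1 : Rsup := [ffun S => if S == set0 then 1 else 0].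

(* sign of y^S y^T = ysign S T * y^(S :|: T) for disjoint S, T *)
Definition ysign (S T : {set 'I_n}) : F :=
  (-1) ^+ #|[set st : 'I_n * 'I_n | [&& st.1 \in S, st.2 \in T & (st.2 < st.1)%N]]|.

Definition Rmul (f g : Rsup) : Rsup :=
  [ffun U => \sum_(S : {set 'I_n}) \sum_(T : {set 'I_n} | [disjoint S & T] && (S :|: T == U))
      ysign S T *: (f S * g T)].

Definition Rx (i : 'I_m) (f : Rsup) : Rsup := [ffun S => 'X_i * f S].

Definition Rdx (i : 'I_m) (f : Rsup) : Rsup := [ffun S => mderiv i (f S)].

(* odd (left) derivation d/dy_t: D_t(y^S) = (-1)^#{s in S | s < t} y^(S\t) if t in S *)
Definition Rdy (t : 'I_n) (f : Rsup) : Rsup :=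
  [ffun U : {set 'I_n} => if t \in U then 0
             else (-1) ^+ #|[set s in U | (s < t)%N]| *: f (t |: U)].

Definition Reven (f : Rsup) : Rsup := [ffun S : {set 'I_n} => if odd #|S| then 0 else f S].
Definition Rodd (f : Rsup) : Rsup := [ffun S : {set 'I_n} => if odd #|S| then f S else 0].

(* indices of gl(m|n) = g_0: z_a = x_a (a < m, even) or y_(a-m) (odd);
   E a b stands for z_a d_b, where d_b = d/dx_b or D_(b-m). *)
Definition ipar (a : 'I_(m + n)) : bool := (m <= a)%N.

Definition sgn2 (p q : bool) : F := (-1) ^+ (p && q).

(* A finite-dimensional super representation xi of g_0 = gl(m|n) on F^d
   (column vectors), with parity pL of the standard basis vectors. *)
Definition is_even_rep (d : nat) (pL : 'I_d -> bool)
    (xi : 'I_(m + n) -> 'I_(m + n) -> 'M[F]_d) : Prop :=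
  (forall a b (l k : 'I_d), pL l != pL k (+) (ipar a (+) ipar b) -> xi a b l k = 0) /\
  (forall a b c e,
     xi a b *m xi c e - sgn2 (ipar a (+) ipar b) (ipar c (+) ipar e) *: (xi c e *m xi a b)
     = (b == c)%:R *: xi a e
       - sgn2 (ipar a (+) ipar b) (ipar c (+) ipar e) *: ((e == a)%:R *: xi c b)).

Definition is_subspace (V : lmodType F) (P : V -> Prop) : Prop :=
  P 0 /\ (forall u v, P u -> P v -> P (u + v)) /\ (forall (c : F) u, P u -> P (c *: u)).

Definition cpart d (pL : 'I_d -> bool) (p : bool) (v : 'cV[F]_d) : 'cV[F]_d :=
  \col_k (if pL k == p then v k 0 else 0).

Definition rep_irreducible d (pL : 'I_d -> bool) (xi : 'I_(m + n) -> 'I_(m + n) -> 'M[F]_d) :=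
  forall P : 'cV[F]_d -> Prop,
    is_subspace P -> (forall v, P v -> P (cpart pL false v)) ->
    (forall a b v, P v -> P (xi a b *m v)) ->
    (forall v, P v -> v = 0) \/ (forall v, P v).

(* lambda is the highest weight w.r.t. the standard Borel (z_a d_b, a < b)
   and Cartan subalgebra spanned by z_a d_a *)
Definition is_highest_weight d (xi : 'I_(m + n) -> 'I_(m + n) -> 'M[F]_d)
    (lam : 'I_(m + n) -> F) : Prop :=
  exists v : 'cV[F]_d, v != 0 /\
    (forall a b : 'I_(m + n), (a < b)%N -> xi a b *m v = 0) /\
    (forall a, xi a a *m v = lam a *: v).

Definition dominant_integral (lam : 'I_(m + n) -> F) : Prop :=
  forall a b : 'I_(m + n), nat_of_ord b = a.+1 -> ipar a = ipar b ->
    exists k : nat, lam a - lam b = k%:R.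

(* V(lambda) = R (x) L; an element u is \sum_k u k (x) e_k *)
Definition Vmod d := {ffun 'I_d -> Rsup}.

Definition Vtensor d (g : Rsup) (v : 'cV[F]_d) : Vmod d := [ffun k => v k 0 *: g].

Definition Vone d (v : 'cV[F]_d) : Vmod d := Vtensor R1 v.

Definition bsign (b : bool) : F := (-1) ^+ b.

Section Action.
Variables (d : nat) (xi : 'I_(m + n) -> 'I_(m + n) -> 'M[F]_d).
Let xx (j i : 'I_m) := xi (lshift n j) (lshift n i).
Let yx (j : 'I_n) (i : 'I_m) := xi (rshift m j) (lshift n i).
Let xy (j : 'I_m) (i : 'I_n) := xi (lshift n j) (rshift m i).
Let yy (j i : 'I_n) := xi (rshift m j) (rshift m i).

(* action of f d_i (f homogeneous of parity pf) on g (x) e_k, g of parity pg *)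
Definition act_dx_hom (pf : bool) (f : Rsup) (i : 'I_m) (pg : bool) (g : Rsup) (k : 'I_d)
  : Vmod d :=
  Vtensor (Rmul f (Rdx i g)) (delta_mx k 0)
  + \sum_(j < m) Vtensor (Rmul (Rdx j f) g) (xx j i *m delta_mx k 0)
  + bsign (pf (+) pg (+) true) *:
      \sum_(j < n) Vtensor (Rmul (Rdy j f) g) (yx j i *m delta_mx k 0).

Definition act_dy_hom (pf : bool) (f : Rsup) (i : 'I_n) (pg : bool) (g : Rsup) (k : 'I_d)
  : Vmod d :=
  Vtensor (Rmul f (Rdy i g)) (delta_mx k 0)
  + bsign pg *: \sum_(j < m) Vtensor (Rmul (Rdx j f) g) (xy j i *m delta_mx k 0)
  + bsign (pf (+) true) *:
      \sum_(j < n) Vtensor (Rmul (Rdy j f) g) (yy j i *m delta_mx k 0).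

Definition act_dx (f : Rsup) (i : 'I_m) (u : Vmod d) : Vmod d :=
  \sum_(k < d)
    (act_dx_hom false (Reven f) i false (Reven (u k)) k
     + act_dx_hom false (Reven f) i true (Rodd (u k)) k
     + act_dx_hom true (Rodd f) i false (Reven (u k)) k
     + act_dx_hom true (Rodd f) i true (Rodd (u k)) k).

Definition act_dy (f : Rsup) (i : 'I_n) (u : Vmod d) : Vmod d :=
  \sum_(k < d)
    (act_dy_hom false (Reven f) i false (Reven (u k)) k
     + act_dy_hom false (Reven f) i true (Rodd (u k)) k
     + act_dy_hom true (Rodd f) i false (Reven (u k)) k
     + act_dy_hom true (Rodd f) i true (Rodd (u k)) k).

End Action.

(* even component of u in V = R (x) L: parity of g (x) e_k is p(g) + pL k *)
Definition Veven d (pL : 'I_d -> bool) (u : Vmod d) : Vmod d :=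
  [ffun k => if pL k then Rodd (u k) else Reven (u k)].

Definition is_submodule d (pL : 'I_d -> bool) (xi : 'I_(m + n) -> 'I_(m + n) -> 'M[F]_d)
    (M : Vmod d -> Prop) : Prop :=
  [/\ is_subspace M,
      (forall u, M u -> M (Veven pL u)),
      (forall f i u, M u -> M (act_dx xi f i u)) &
      (forall f i u, M u -> M (act_dy xi f i u))].

Definition is_simple_submodule d pL xi (M : Vmod d -> Prop) : Prop :=
  is_submodule pL xi M /\ (exists u, M u /\ u != 0) /\
  forall N : Vmod d -> Prop, is_submodule pL xi N -> (forall u, N u -> M u) ->
     (forall u, N u -> u = 0) \/ (forall u, M u -> N u).

Definition gen_one d pL xi : Vmod d -> Prop :=
  fun u => forall N : Vmod d -> Prop, is_submodule pL xi N ->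
    (forall v, N (Vone v)) -> N u.

End Wmn.

(* Main.v *)
Require Import Defs.
From HB Require Import structures.
From mathcomp Require Import all_boot all_order all_algebra.
From mathcomp Require Import mpoly.
From Stdlib Require Import Classical.
Import GRing.Theory.
Local Open Scope ring_scope.

Module Aux.
Set Implicit Arguments. Unset Strict Implicit. Unset Printing Implicit Defensive.
Section RL.
Variables (F : fieldType) (m n : nat).
Local Notation Rs := (Rsup F m n).

Lemma Rmul0 (g : Rs) : Rmul 0 g = 0.
Proof.
apply/ffunP=> U; rewrite !ffunE big1 // => S _; rewrite big1 // => T _.
by rewrite ffunE mul0r scaler0.
Qed.

Lemma Rmulr0 (f : Rs) : Rmul f 0 = 0.
Proof.
apply/ffunP=> U; rewrite !ffunE big1 // => S _; rewrite big1 // => T _.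
by rewrite ffunE mulr0 scaler0.
Qed.

Lemma Rmul1 (g : Rs) : Rmul (R1 F m n) g = g.
Proof.
apply/ffunP=> U; rewrite ffunE (bigD1 set0) //= [X in _ + X]big1 ?addr0; last first.
  move=> S hS; rewrite big1 // => T _; by rewrite ffunE (negbTE hS) mul0r scaler0.
rewrite (eq_bigl (fun T => T == U)); last first.
  by move=> T; rewrite set0U (_ : [disjoint set0 & T]) //; apply/pred0P=> x; rewrite !inE.
rewrite big_pred1_eq ffunE eqxx mul1r.
rewrite /ysign (_ : [set st | _] = set0) ?cards0 ?expr0 ?scale1r //.
by apply/setP=> st; rewrite !inE.
Qed.

Lemma RmulZ (a : F) (f g : Rs) : Rmul (a *: f) g = a *: Rmul f g.
Proof.
apply/ffunP=> U; rewrite !ffunE scaler_sumr; apply: eq_bigr => S _.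
rewrite scaler_sumr; apply: eq_bigr => T _.
by rewrite ffunE -scalerAl !scalerA mulrC.
Qed.

Lemma RdxD i (f g : Rs) : Rdx i (f + g) = Rdx i f + Rdx i g.
Proof. by apply/ffunP=> S; rewrite !ffunE mderivD. Qed.
Lemma RdxZ i a (f : Rs) : Rdx i (a *: f) = a *: Rdx i f.
Proof. by apply/ffunP=> S; rewrite !ffunE mderivZ. Qed.
Lemma Rdx0 i : Rdx i (0 : Rs) = 0.
Proof. by apply/ffunP=> S; rewrite !ffunE mderiv0. Qed.
Lemma RdyD i (f g : Rs) : Rdy i (f + g) = Rdy i f + Rdy i g.
Proof. by apply/ffunP=> S; rewrite !ffunE; case: ifP; rewrite ?addr0 // scalerDr. Qed.
Lemma RdyZ i a (f : Rs) : Rdy i (a *: f) = a *: Rdy i f.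
Proof. by apply/ffunP=> S; rewrite !ffunE; case: ifP; rewrite ?scaler0 // !scalerA mulrC. Qed.
Lemma Rdy0 i : Rdy i (0 : Rs) = 0.
Proof. by apply/ffunP=> S; rewrite !ffunE; case: ifP; rewrite ?scaler0. Qed.

Lemma Rdx1 i : Rdx i (R1 F m n) = 0.
Proof.
apply/ffunP=> S; rewrite !ffunE; case: ifP => _; last by rewrite mderiv0.
by rewrite -mpolyC1 mderivC.
Qed.
Lemma Rdy1 i : Rdy i (R1 F m n) = 0.
Proof.
apply/ffunP=> S; rewrite !ffunE; case: ifP => // _.
rewrite (_ : (i |: S == set0) = false) ?scaler0 //.
by apply/negbTE/set0Pn; exists i; rewrite !inE eqxx.
Qed.

Lemma RevenoddE (f : Rs) : Reven f + Rodd f = f.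
Proof. by apply/ffunP=> S; rewrite !ffunE; case: ifP; rewrite ?add0r ?addr0. Qed.
Lemma RevenR1 (c : F) : Reven (c *: R1 F m n) = c *: R1 F m n.
Proof.
apply/ffunP=> S; rewrite !ffunE; case: eqP => [->|]; first by rewrite cards0.
by rewrite scaler0; case: ifP.
Qed.
Lemma RoddR1 (c : F) : Rodd (c *: R1 F m n) = 0.
Proof.
apply/ffunP=> S; rewrite !ffunE; case: eqP => [->|]; first by rewrite cards0.
by rewrite scaler0; case: ifP.
Qed.
Lemma RevenR1' : Reven (R1 F m n) = R1 F m n.
Proof. by rewrite -(scale1r (R1 F m n)) RevenR1. Qed.
Lemma RoddR1' : Rodd (R1 F m n) = 0.
Proof. by rewrite -(scale1r (R1 F m n)) RoddR1. Qed.
Lemma Reven0 : Reven (0 : Rs) = 0.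
Proof. by apply/ffunP=> S; rewrite !ffunE; case: ifP. Qed.
Lemma Rodd0 : Rodd (0 : Rs) = 0.
Proof. by apply/ffunP=> S; rewrite !ffunE; case: ifP. Qed.

End RL.

Section AL.
Variables (F : fieldType) (m n d : nat) (xi : 'I_(m + n) -> 'I_(m + n) -> 'M[F]_d).
Local Notation Rs := (Rsup F m n).
Local Notation V := (Vmod F m n d).

Lemma Vtensor0 (v : 'cV[F]_d) : Vtensor (0 : Rs) v = 0.
Proof. by apply/ffunP=> k; rewrite !ffunE scaler0. Qed.
Lemma VtensorD (g h : Rs) (v : 'cV[F]_d) : Vtensor (g + h) v = Vtensor g v + Vtensor h v.
Proof. by apply/ffunP=> k; rewrite !ffunE scalerDr. Qed.
Lemma VtensorZ (c : F) (g : Rs) (v : 'cV[F]_d) : Vtensor (c *: g) v = Vtensor g (c *: v).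
Proof. by apply/ffunP=> k; rewrite !ffunE scalerA mxE mulrC. Qed.
Lemma Vtensor_sum (g : Rs) (v : 'I_d -> 'cV[F]_d) :
  \sum_k Vtensor g (v k) = Vtensor g (\sum_k v k).
Proof.
apply/ffunP=> k; rewrite !ffunE sum_ffunE summxE scaler_suml.
by apply: eq_bigr => i _; rewrite ffunE.
Qed.
Lemma Vtensor_delta (u : V) : \sum_k Vtensor (u k) (delta_mx k 0) = u.
Proof.
apply/ffunP=> k; rewrite sum_ffunE (bigD1 k) //= big1 ?addr0.
  by rewrite ffunE mxE !eqxx scale1r.
by move=> i hi; rewrite ffunE mxE eq_sym (negbTE hi) scale0r.
Qed.
Lemma colE (w : 'cV[F]_d) : \sum_k w k 0 *: delta_mx k 0 = w.
Proof.
by rewrite [RHS]matrix_sum_delta; apply: eq_bigr => k _; rewrite big_ord1.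
Qed.
Lemma Vone_mul (A : 'M[F]_d) (w : 'cV[F]_d) :
  \sum_k Vtensor (w k 0 *: R1 F m n) (A *m delta_mx k 0) = Vone m n (A *m w).
Proof.
rewrite (eq_bigr (fun k => Vtensor (R1 F m n) (w k 0 *: (A *m delta_mx k 0)))).
  rewrite Vtensor_sum /Vone; congr (Vtensor _ _).
  rewrite -[w in RHS]colE mulmx_sumr; apply: eq_bigr => k _; by rewrite scalemxAr.
by move=> k _; rewrite VtensorZ.
Qed.

Lemma hdx0g pf i pg k : act_dx_hom xi pf 0 i pg 0 k = 0.
Proof.
by rewrite /act_dx_hom /= Rdx0 Rmulr0 Vtensor0 !big1 ?scaler0 ?addr0 // => j _;
  rewrite Rmulr0 Vtensor0.
Qed.
Lemma hdx_f0 pf f i pg k : act_dx_hom xi pf f i pg 0 k = 0.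
Proof.
by rewrite /act_dx_hom /= Rdx0 Rmulr0 Vtensor0 !big1 ?scaler0 ?addr0 // => j _;
  rewrite Rmulr0 Vtensor0.
Qed.
Lemma hdx_0g pf i pg g k : act_dx_hom xi pf 0 i pg g k = 0.
Proof.
by rewrite /act_dx_hom /= Rmul0 Vtensor0 !big1 ?scaler0 ?addr0 // => j _;
  rewrite ?Rdx0 ?Rdy0 Rmul0 Vtensor0.
Qed.
Lemma hdy_f0 pf f i pg k : act_dy_hom xi pf f i pg 0 k = 0.
Proof.
by rewrite /act_dy_hom /= Rdy0 Rmulr0 Vtensor0 !big1 ?scaler0 ?addr0 // => j _;
  rewrite Rmulr0 Vtensor0.
Qed.
Lemma hdy_0g pf i pg g k : act_dy_hom xi pf 0 i pg g k = 0.
Proof.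
by rewrite /act_dy_hom /= Rmul0 Vtensor0 !big1 ?scaler0 ?addr0 // => j _;
  rewrite ?Rdx0 ?Rdy0 Rmul0 Vtensor0.
Qed.

Definition dxop i (u : V) : V := [ffun k => Rdx i (u k)].
Definition dyop i (u : V) : V := [ffun k => Rdy i (u k)].

Lemma act_dx1 i u : act_dx xi (R1 F m n) i u = dxop i u.
Proof.
rewrite /act_dx RevenR1' RoddR1' -[RHS]Vtensor_delta; apply: eq_bigr => k _.
rewrite !hdx_0g !addr0 /act_dx_hom /=.
rewrite !big1 ?scaler0 ?addr0; try by move=> j _; rewrite ?Rdx1 ?Rdy1 Rmul0 Vtensor0.
by rewrite !Rmul1 -VtensorD -RdxD RevenoddE ffunE.
Qed.

Lemma act_dy1 i u : act_dy xi (R1 F m n) i u = dyop i u.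
Proof.
rewrite /act_dy RevenR1' RoddR1' -[RHS]Vtensor_delta; apply: eq_bigr => k _.
rewrite !hdy_0g !addr0 /act_dy_hom /=.
rewrite !big1 ?scaler0 ?addr0; try by move=> j _; rewrite ?Rdx1 ?Rdy1 Rmul0 Vtensor0.
by rewrite !Rmul1 -VtensorD -RdyD RevenoddE ffunE.
Qed.

End AL.

Section GL.
Variables (F : fieldType) (m n d : nat) (xi : 'I_(m + n) -> 'I_(m + n) -> 'M[F]_d).
Local Notation Rs := (Rsup F m n).
Local Notation V := (Vmod F m n d).

Definition xf (j : 'I_m) : Rs := [ffun S => if S == set0 then 'X_j else 0].
Definition yf (j : 'I_n) : Rs := [ffun S => if S == [set j] then 1 else 0].

Lemma Reven_xf j : Reven (xf j) = xf j.
Proof. apply/ffunP=> S; rewrite !ffunE; case: eqP => [->|]; by rewrite ?cards0 //; case: ifP. Qed.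
Lemma Rodd_xf j : Rodd (xf j) = 0.
Proof. apply/ffunP=> S; rewrite !ffunE; case: eqP => [->|]; by rewrite ?cards0 //; case: ifP. Qed.
Lemma Reven_yf j : Reven (yf j) = 0.
Proof. apply/ffunP=> S; rewrite !ffunE; case: eqP => [->|]; by rewrite ?cards1 //; case: ifP. Qed.
Lemma Rodd_yf j : Rodd (yf j) = yf j.
Proof. apply/ffunP=> S; rewrite !ffunE; case: eqP => [->|]; by rewrite ?cards1 //; case: ifP. Qed.

Lemma Rdx_xf j' j : Rdx j' (xf j) = if j == j' then R1 F m n else 0.
Proof.
apply/ffunP=> S; rewrite !ffunE.
case: (S =P set0) => hS; last by case: ifP; rewrite ?ffunE ?mderiv0 //; move/eqP: hS => /negbTE ->.
rewrite mderivX mnm1E; case: eqP => [->|]; last by rewrite ffunE scale0r.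
rewrite ffunE hS eqxx scale1r.
have -> : (U_(j') - U_(j') = 0)%MM by apply/mnmP=> l; rewrite mnmBE subnn mnm0E.
by rewrite mpolyX0.
Qed.
Lemma Rdy_xf j' j : Rdy j' (xf j) = 0.
Proof.
apply/ffunP=> S; rewrite !ffunE; case: ifP => // _.
rewrite (_ : (j' |: S == set0) = false) ?scaler0 //.
by apply/negbTE/set0Pn; exists j'; rewrite !inE eqxx.
Qed.
Lemma Rdx_yf j' j : Rdx j' (yf j) = 0.
Proof.
apply/ffunP=> S; rewrite !ffunE; case: ifP => _; last by rewrite mderiv0.
by rewrite -mpolyC1 mderivC.
Qed.
Lemma Rdy_yf j' j : Rdy j' (yf j) = if j' == j then R1 F m n else 0.
Proof.
apply/ffunP=> S; rewrite !ffunE; case: ifP => hS.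
  case: eqP => [e|_]; last by rewrite ffunE.
  by rewrite ffunE; case: eqP => // e0; rewrite e0 inE in hS.
case: eqP => [hj|hj].
  have hj' : j' = j by apply/set1P; rewrite -hj !inE eqxx.
  subst j'; rewrite eqxx ffunE.
  have e : S = set0.
    apply/setP=> s; rewrite inE; apply/negbTE/negP=> hs.
    have : s \in [set j] by rewrite -hj !inE hs orbT.
    by rewrite inE => /eqP hsj; subst s; rewrite hs in hS.
  rewrite e eqxx (_ : [set s in set0 | _] = set0) ?cards0 ?expr0 ?scale1r //.
  by apply/setP=> s; rewrite !inE.
rewrite scaler0; case: eqP => [hj'|_]; last by rewrite ffunE. subst j'.
rewrite ffunE; case: eqP => // hS0; subst S.
by exfalso; apply: hj; rewrite setU0.
Qed.

Lemma Vone_kE (w : 'cV[F]_d) k : Vone m n w k = w k 0 *: R1 F m n.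
Proof. by rewrite ffunE. Qed.

Lemma RdxR1Z i (c : F) : Rdx i (c *: R1 F m n) = 0.
Proof. by rewrite RdxZ Rdx1 scaler0. Qed.
Lemma RdyR1Z i (c : F) : Rdy i (c *: R1 F m n) = 0.
Proof. by rewrite RdyZ Rdy1 scaler0. Qed.

Lemma act_xx j i w :
  act_dx xi (xf j) i (Vone m n w) = Vone m n (xi (lshift n j) (lshift n i) *m w).
Proof.
rewrite /act_dx Reven_xf Rodd_xf -Vone_mul; apply: eq_bigr => k _.
rewrite !hdx_0g !addr0 Vone_kE RoddR1 RevenR1 hdx_f0 addr0 /act_dx_hom /=.
rewrite RdxR1Z Rmulr0 Vtensor0 add0r.
rewrite [X in _ + _ *: X]big1 ?scaler0 ?addr0; last first.
  by move=> l _; rewrite Rdy_xf Rmul0 Vtensor0.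
rewrite (bigD1 j) //= big1 ?addr0; last first.
  by move=> l hl; rewrite Rdx_xf eq_sym (negbTE hl) Rmul0 Vtensor0.
by rewrite Rdx_xf eqxx Rmul1.
Qed.

Lemma act_xy j i w :
  act_dy xi (xf j) i (Vone m n w) = Vone m n (xi (lshift n j) (rshift m i) *m w).
Proof.
rewrite /act_dy Reven_xf Rodd_xf -Vone_mul; apply: eq_bigr => k _.
rewrite !hdy_0g !addr0 Vone_kE RoddR1 RevenR1 hdy_f0 addr0 /act_dy_hom /=.
rewrite RdyR1Z Rmulr0 Vtensor0 add0r.
rewrite [X in _ + _ *: X]big1 ?scaler0 ?addr0; last first.
  by move=> l _; rewrite Rdy_xf Rmul0 Vtensor0.
rewrite /bsign expr0 scale1r (bigD1 j) //= big1 ?addr0; last first.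
  by move=> l hl; rewrite Rdx_xf eq_sym (negbTE hl) Rmul0 Vtensor0.
by rewrite Rdx_xf eqxx Rmul1.
Qed.

Lemma act_yx j i w :
  act_dx xi (yf j) i (Vone m n w) = Vone m n (xi (rshift m j) (lshift n i) *m w).
Proof.
rewrite /act_dx Reven_yf Rodd_yf -Vone_mul; apply: eq_bigr => k _.
rewrite !hdx_0g !add0r Vone_kE RoddR1 RevenR1 hdx_f0 addr0 /act_dx_hom /=.
rewrite RdxR1Z Rmulr0 Vtensor0 add0r.
rewrite [X in X + _]big1 ?add0r; last first.
  by move=> l _; rewrite Rdx_yf Rmul0 Vtensor0.
rewrite /bsign expr0 scale1r (bigD1 j) //= big1 ?addr0; last first.
  by move=> l hl; rewrite Rdy_yf (negbTE hl) Rmul0 Vtensor0.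
by rewrite Rdy_yf eqxx Rmul1.
Qed.

Lemma act_yy j i w :
  act_dy xi (yf j) i (Vone m n w) = Vone m n (xi (rshift m j) (rshift m i) *m w).
Proof.
rewrite /act_dy Reven_yf Rodd_yf -Vone_mul; apply: eq_bigr => k _.
rewrite !hdy_0g !add0r Vone_kE RoddR1 RevenR1 hdy_f0 addr0 /act_dy_hom /=.
rewrite RdyR1Z Rmulr0 Vtensor0 add0r.
rewrite [X in _ *: X + _]big1 ?scaler0 ?add0r; last first.
  by move=> l _; rewrite Rdx_yf Rmul0 Vtensor0.
rewrite /bsign expr0 scale1r (bigD1 j) //= big1 ?addr0; last first.
  by move=> l hl; rewrite Rdy_yf (negbTE hl) Rmul0 Vtensor0.
by rewrite Rdy_yf eqxx Rmul1.
Qed.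

End GL.

Section Main.
Variables (F : fieldType) (m n d : nat) (pL : 'I_d -> bool)
  (xi : 'I_(m + n) -> 'I_(m + n) -> 'M[F]_d).
Local Notation Rs := (Rsup F m n).
Local Notation V := (Vmod F m n d).
Variable M : V -> Prop.
Hypothesis hM : is_submodule pL xi M.

Lemma nz_ex (u : V) : u != 0 -> exists k S, u k S != 0.
Proof.
move=> hu; case: (boolP [exists k, exists S, u k S != 0]).
  by move=> /existsP[k /existsP[S h]]; exists k, S.
move=> h; exfalso; move/negP: hu; apply; apply/eqP/ffunP=> k; apply/ffunP=> S.
rewrite !ffunE; by move/existsPn: h => /(_ k)/existsPn/(_ S)/negPn/eqP.
Qed.

Lemma ex_nz (u : V) k S : u k S != 0 -> u != 0.
Proof. by move=> h; apply/eqP=> e; rewrite e !ffunE eqxx in h. Qed.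

Lemma M_dx i u : M u -> M (dxop i u).
Proof. by case: hM => _ _ hx _ Mu; rewrite -(act_dx1 xi); apply: hx. Qed.
Lemma M_dy i u : M u -> M (dyop i u).
Proof. by case: hM => _ _ _ hy Mu; rewrite -(act_dy1 xi); apply: hy. Qed.

Lemma phaseA s : forall u, M u -> u != 0 -> (forall k S, u k S != 0 -> (#|S| <= s)%N) ->
  exists u', [/\ M u', u' != 0 & forall k S, S != set0 -> u' k S = 0].
Proof.
elim: s => [|s IH] u Mu hu hs.
  exists u; split=> // k S hS; apply/eqP; apply: contraNT hS => h.
  by rewrite -cards_eq0 -leqn0 (hs k).
case: (boolP [exists k, exists S, (u k S != 0) && (#|S| == s.+1)]); last first.
  move=> h; apply: (IH u) => // k S hk; have := hs k S hk.
  rewrite leq_eqVlt ltnS => /orP[/eqP e|//]; exfalso.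
  by move/existsPn: h => /(_ k)/existsPn/(_ S); rewrite hk e eqxx.
move=> /existsP[k /existsP[S /andP[hk /eqP hS]]].
have : S != set0 by rewrite -cards_eq0 hS.
case/set0Pn=> t ht.
apply: (IH (dyop t u)); first exact: M_dy.
  apply: (@ex_nz _ k (S :\ t)); rewrite !ffunE !inE eqxx /=.
  by rewrite setD1K // scaler_eq0 negb_or hk signr_eq0.
move=> k' U; rewrite !ffunE; case: ifP => [_|htU]; first by rewrite eqxx.
rewrite scaler_eq0 negb_or => /andP[_ /hs].
by rewrite cardsU1 htU add1n ltnS.
Qed.

Definition lift (h : {mpoly F[m]} -> {mpoly F[m]}) (u : V) : V :=
  [ffun k => [ffun S => h (u k S)]].

Lemma lift_comp i h u : lift (fun q => mderiv i (h q)) u = dxop i (lift h u).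
Proof. by apply/ffunP=> k; apply/ffunP=> S; rewrite !ffunE. Qed.

Lemma M_lift_iter i k h : (forall u, M u -> M (lift h u)) ->
  forall u, M u -> M (lift (fun q => iter k (mderiv i) (h q)) u).
Proof.
move=> hh; elim: k => [|k IH] u Mu /=; first exact: hh.
by rewrite lift_comp; apply: M_dx; apply: IH.
Qed.

Lemma M_mderivm mon u : M u -> M (lift (mderivm mon) u).
Proof.
rewrite /mderivm; elim: (enum 'I_m) u => [|i s IH] u Mu /=.
  by rewrite (_ : lift _ u = u) //; apply/ffunP=> k; apply/ffunP=> S; rewrite !ffunE.
exact: (@M_lift_iter i (mon i) _ IH u Mu).
Qed.

Hypothesis Fchar0 : [pchar F] =i pred0.

Lemma phaseB u : M u -> u != 0 -> (forall k S, S != set0 -> u k S = 0) ->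
  exists w : 'cV[F]_d, w != 0 /\ M (Vone m n w).
Proof.
move=> Mu hu hS.
have [k1 hk1] : exists k, u k set0 != 0.
  case: (nz_ex hu) => k [S h]; exists k; case: (S =P set0) => [<-//|/eqP hS0].
  by rewrite (hS k S hS0) eqxx in h.
pose p k := u k set0.
case: (@arg_maxnP _ k1 predT (fun k => msize (p k)) isT) => k0 _ hmax.
have pk0 : p k0 != 0.
  rewrite -msize_poly_eq0 -lt0n; apply: leq_trans (hmax k1 isT).
  by rewrite lt0n msize_poly_eq0.
pose mon := mlead (p k0).
have hdeg : forall k m', m' != 0%MM -> (p k)@_(mon + m') = 0.
  move=> k m' hm'; apply/eqP; rewrite -[_ == 0]negbK -mcoeff_msupp; apply: msize_mdeg_ge.
  apply: leq_trans (hmax k isT) _; rewrite -(mlead_deg pk0) mdegD -/mon -addn1 leq_add2l.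
  by rewrite lt0n mdeg_eq0.
pose w : 'cV[F]_d := \col_k ((mderivm mon (p k))@_0).
exists w; split.
  apply/eqP=> /matrixP /(_ k0 0); rewrite !mxE mcoeff_mderivm addm0 => /eqP.
  rewrite -mulr_natr mulf_eq0 => /orP[]; first by rewrite mleadc_eq0 (negbTE pk0).
  rewrite ((pcharf0P F).1 Fchar0) => /eqP h.
  have : (0 < \prod_(i < m) mon i ^_ mon i)%N.
    by apply: prodn_gt0 => i; rewrite ffactnn fact_gt0.
  by rewrite h.
rewrite (_ : Vone m n w = lift (mderivm mon) u); first exact: M_mderivm.
apply/ffunP=> k; apply/ffunP=> S; rewrite !ffunE.
case: (S =P set0) => [->|/eqP hS0]; last first.
  rewrite hS // -[0 in RHS](scale0r (0 : {mpoly F[m]})) mderivmZ scale0r. by rewrite scaler0.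
rewrite mxE; apply/mpolyP=> m'; rewrite mcoeffZ mcoeff1.
case: (m' =P 0%MM) => [->|/eqP hm']; first by rewrite mulr1.
by rewrite mulr0 mcoeff_mderivm hdeg // mul0rn.
Qed.

End Main.

Section C.
Variables (F : fieldType) (m n d : nat) (pL : 'I_d -> bool)
  (xi : 'I_(m + n) -> 'I_(m + n) -> 'M[F]_d).
Local Notation V := (Vmod F m n d).

Lemma VoneD (v1 v2 : 'cV[F]_d) : Vone m n (v1 + v2) = Vone m n v1 + Vone m n v2.
Proof. by apply/ffunP=> k; rewrite !ffunE mxE scalerDl. Qed.
Lemma VoneZ c (v : 'cV[F]_d) : Vone m n (c *: v) = c *: Vone m n v.
Proof. by apply/ffunP=> k; rewrite !ffunE mxE scalerA. Qed.
Lemma Vone0 : Vone m n (0 : 'cV[F]_d) = 0.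
Proof. by apply/ffunP=> k; rewrite !ffunE mxE scale0r. Qed.
Lemma Veven_Vone (w : 'cV[F]_d) : Veven pL (Vone m n w) = Vone m n (cpart pL false w).
Proof.
apply/ffunP=> k; rewrite !ffunE mxE RoddR1 RevenR1.
by case: (pL k); rewrite ?scale0r.
Qed.

Lemma Vone_nz (v : 'cV[F]_d) : v != 0 -> Vone m n v != 0.
Proof.
move=> hv; have [k hk] : exists k, v k 0 != 0.
  case: (boolP [exists k, v k 0 != 0]) => [/existsP[k hk]|h]; first by exists k.
  exfalso; move/negP: hv; apply; apply/eqP/matrixP=> k j; rewrite ord1 mxE.
  by move/existsPn: h => /(_ k)/negPn/eqP.
apply: (@ex_nz _ _ _ _ _ k set0); rewrite Vone_kE ffunE. rewrite ffunE eqxx scaler_eq0 negb_or hk.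
by rewrite oner_eq0.
Qed.

Variable M : V -> Prop.
Hypothesis hM : is_submodule pL xi M.
Hypothesis hirr : rep_irreducible pL xi.

Lemma phaseC w : w != 0 -> M (Vone m n w) -> forall v, M (Vone m n v).
Proof.
move=> hw Mw; case: hM => [[h0 [hD hZ]] hev hx hy].
have := hirr (P := fun v => M (Vone m n v)).
case.
- split; first by rewrite Vone0.
  split; first by move=> u v Mu Mv; rewrite VoneD; apply: hD.
  by move=> c u Mu; rewrite VoneZ; apply: hZ.
- by move=> v Mv; rewrite -Veven_Vone; apply: hev.
- move=> a b v Mv; rewrite -(splitK a) -(splitK b).
  case: (split a) => j; case: (split b) => i /=.
  + by rewrite -act_xx; apply: hx.
  + by rewrite -act_xy; apply: hy.
  + by rewrite -act_yx; apply: hx.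
  + by rewrite -act_yy; apply: hy.
- by move=> /(_ w Mw) e; rewrite e eqxx in hw.
- by [].
Qed.

End C.

Lemma part1 (F : fieldType) (Fchar0 : [pchar F] =i pred0) (m n d : nat) (pL : 'I_d -> bool)
  (xi : 'I_(m + n) -> 'I_(m + n) -> 'M[F]_d) (hirr : rep_irreducible pL xi)
  (M : Vmod F m n d -> Prop) (hM : is_submodule pL xi M) :
  (exists u, M u /\ u != 0) -> forall v : 'cV[F]_d, M (Vone m n v).
Proof.
case=> u [Mu hu].
have [u' [Mu' hu' h0]] := phaseA hM Mu hu (fun k S _ => max_card (mem S)).
have [w [hw Mw]] := phaseB hM Fchar0 Mu' hu' h0.
exact: (phaseC hM hirr hw Mw).
Qed.

Lemma gen_one_sub (F : fieldType) (m n d : nat) (pL : 'I_d -> bool)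
  (xi : 'I_(m + n) -> 'I_(m + n) -> 'M[F]_d) : is_submodule pL xi (gen_one pL xi).
Proof.
split.
- split; first by move=> N [[h0 _] _ _ _] _.
  split; first by move=> u v hu hv N hN h1; case: (hN) => [[_ [hD _]] _ _ _]; apply: hD; [apply: hu|apply: hv].
  by move=> c u hu N hN h1; case: (hN) => [[_ [_ hZ]] _ _ _]; apply: hZ; apply: hu.
- by move=> u hu N hN h1; case: (hN) => [_ hev _ _]; apply: hev; apply: hu.
- by move=> f i u hu N hN h1; case: (hN) => [_ _ hx _]; apply: hx; apply: hu.
- by move=> f i u hu N hN h1; case: (hN) => [_ _ _ hy]; apply: hy; apply: hu.
Qed.

End Aux.
Import Aux.

Theorem mainTheorem2 (F : closedFieldType) (Fchar0 : [pchar F] =i pred0)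
  (m n : nat) (hm : (1 <= m)%N) (hn : (1 <= n)%N)
  (lam : 'I_(m + n) -> F) (hlam : dominant_integral lam)
  (d : nat) (pL : 'I_d -> bool) (xi : 'I_(m + n) -> 'I_(m + n) -> 'M[F]_d)
  (hrep : is_even_rep pL xi) (hirr : rep_irreducible pL xi)
  (hhw : is_highest_weight xi lam) :
  (forall M : Vmod F m n d -> Prop, is_submodule pL xi M ->
     (exists u, M u /\ u != 0) -> forall v : 'cV[F]_d, M (Vone m n v))
  /\ is_simple_submodule pL xi (gen_one pL xi)
  /\ (forall M : Vmod F m n d -> Prop, is_simple_submodule pL xi M ->
        forall u, M u <-> gen_one pL xi u).
Proof.
have P1 : forall M : Vmod F m n d -> Prop, is_submodule pL xi M ->
     (exists u, M u /\ u != 0) -> forall v : 'cV[F]_d, M (Vone m n v).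
  by move=> M hM; apply: (part1 Fchar0 hirr hM).
have [v0 [hv0 _]] := hhw.
have G1 : forall v, gen_one pL xi (Vone m n v) by move=> v N _ h; apply: h.
split=> //; split.
  split; first exact: (@gen_one_sub _ m n d pL xi).
  split; first by exists (Vone m n v0); split; [apply: G1 | apply: Vone_nz].
  move=> N hN hNG; case: (classic (exists u, N u /\ u != 0)) => [ex|nex].
    by right=> u hu; apply: hu => //; apply: P1.
  left=> u Nu; apply/eqP; apply/negPn/negP=> hu; apply: nex; by exists u.
move=> M [hM [hex hsimp]] u; split; last by move=> hu; apply: hu => //; apply: P1.
move=> Mu; case: (hsimp _ (@gen_one_sub _ m n d pL xi)).
- by move=> v hv; apply: hv => //; apply: P1.
- by move=> /(_ _ (G1 v0))/eqP; rewrite (negbTE (Vone_nz m n hv0)).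
- by move=> h; apply: h.
Qed.
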